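(* Let $e_1,\dots,e_p\in\mathbb{C}^m$ and $f_1,\dots,f_p\in\mathbb{C}^n$ be unit vectors with $[e_1]=[e_2]=\cdots=[e_p]$. Then the face $F$ of $S$ generated by the states $\{\omega_{e_i\otimes f_i}:1\le i\le p\}$ is also a face of $K$; namely it is the face of $K$ associated with the subspace $L=e_1\otimes\operatorname{Span}\{f_1,\dots,f_p\}$ of $\mathbb{C}^m\otimes\mathbb{C}^n$, and $F$ is affinely isomorphic to the state space of $\mathcal{B}(L)$.
   Context: $\mathcal{B}(\mathbb{C}^m\otimes\mathbb{C}^n)$ is identified with $\mathcal{B}(\mathbb{C}^m)\otimes\mathcal{B}(\mathbb{C}^n)$. $K$ denotes the state space of $\mathcal{B}(\mathbb{C}^m\otimes\mathbb{C}^n)$ and $S\subseteq K$ the convex set of separable states, i.e. convex combinations of product states $\omega\otimes\sigma$; equivalently, convex combinations of pure product states $\omega_{x\otimes y}$ ($x\in\mathbb{C}^m$, $y\in\mathbb{C}^n$ unit vectors), where $\omega_z(A)=(Az,z)$. $[x]$ denotes the line spanned by $x$. The face of a convex set generated by a subset is the smallest face containing it. The face of $K$ associated with a subspace $M$ of $\mathbb{C}^m\otimes\mathbb{C}^n$ with projection $Q$ is $\{\omega\in K:\omega(Q)=1\}$, the convex hull of vector states $\omega_z$, $z\in M$ a unit vector. *)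

(* Defs.v *)
From HB Require Import structures.
From mathcomp Require Import all_boot all_order all_algebra all_field.
Set Implicit Arguments. Unset Strict Implicit. Unset Printing Implicit Defensive.
Import Order.TTheory GRing.Theory Num.Theory.
Local Open Scope ring_scope.

(* B(C^N) = 'M[algC]_N ; functionals on it *)
Definition fn (N : nat) := 'M[algC]_N -> algC.

Definition adj (m n : nat) (A : 'M[algC]_(m, n)) : 'M[algC]_(n, m) :=
  map_mx Num.conj (A^T).

Definition is_state (N : nat) (w : fn N) : Prop :=
  (forall (a : algC) (A B : 'M[algC]_N), w (a *: A + B) = a * w A + w B) /\
  (forall A : 'M[algC]_N, 0 <= w (adj A *m A)) /\
  w 1%:M = 1.

Definition K (N : nat) : fn N -> Prop := fun w => is_state w.

Definition vstate (N : nat) (z : 'cV[algC]_N) : fn N :=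
  fun A => (adj z *m A *m z) 0 0.

Definition unitv (N : nat) (z : 'cV[algC]_N) : Prop := (adj z *m z) 0 0 = 1.

(* x (x) y in C^m (x) C^n = C^(m*n), via the library identification mxvec *)
Definition tensv (m n : nat) (x : 'cV[algC]_m) (y : 'cV[algC]_n) : 'cV[algC]_(m * n) :=
  (mxvec (x *m y^T))^T.

Definition Sep (m n : nat) : fn (m * n) -> Prop := fun w =>
  exists (k : nat) (l : 'I_k -> algC) (x : 'I_k -> 'cV[algC]_m) (y : 'I_k -> 'cV[algC]_n),
    (forall i, 0 <= l i) /\ \sum_(i < k) l i = 1 /\
    (forall i, unitv (x i) /\ unitv (y i)) /\
    (forall A, w A = \sum_(i < k) l i * vstate (tensv (x i) (y i)) A).

Definition cc (N : nat) (t : algC) (w1 w2 : fn N) : fn N :=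
  fun A => t * w1 A + (1 - t) * w2 A.

Definition is_convex (N : nat) (C : fn N -> Prop) : Prop :=
  forall w1 w2 t, C w1 -> C w2 -> 0 <= t <= 1 -> C (cc t w1 w2).

Definition is_face (N : nat) (C F : fn N -> Prop) : Prop :=
  (forall w, F w -> C w) /\ is_convex F /\
  (forall w1 w2 t, C w1 -> C w2 -> 0 < t < 1 -> F (cc t w1 w2) -> F w1 /\ F w2).

Definition face_gen (N : nat) (C A : fn N -> Prop) : fn N -> Prop :=
  fun w => forall G, is_face C G -> (forall v, A v -> G v) -> G w.

Definition affine_iso (N M : nat) (F : fn N -> Prop) (G : fn M -> Prop) : Prop :=
  exists phi : fn N -> fn M,
    (forall w, F w -> G (phi w)) /\
    (forall w1 w2, F w1 -> F w2 -> phi w1 = phi w2 -> w1 = w2) /\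
    (forall v, G v -> exists w, F w /\ phi w = v) /\
    (forall w1 w2 t, F w1 -> F w2 -> 0 <= t <= 1 ->
       phi (cc t w1 w2) = cc t (phi w1) (phi w2)).

(* matrix whose rows span L = e (x) Span{f_1..f_p} *)
Definition Lmx (m n p : nat) (e : 'cV[algC]_m) (f : 'I_p -> 'cV[algC]_n)
  : 'M[algC]_(p, m * n) := \matrix_(i < p) (tensv e (f i))^T.

(* Main.v *)
Require Import Defs.
From HB Require Import structures.
From mathcomp Require Import all_boot all_order all_algebra all_field.
From Stdlib Require Import FunctionalExtensionality.
Import Order.TTheory GRing.Theory Num.Theory.
Set Implicit Arguments. Unset Strict Implicit. Unset Printing Implicit Defensive.
Local Open Scope ring_scope.

Section Adj.
Lemma adjK m n (A : 'M[algC]_(m, n)) : adj (adj A) = A.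
Proof. by apply/matrixP=> i j; rewrite !mxE conjCK. Qed.
Lemma adjM m n k (A : 'M[algC]_(m, n)) (B : 'M[algC]_(n, k)) :
  adj (A *m B) = adj B *m adj A.
Proof. by rewrite /adj trmx_mul map_mxM. Qed.
Lemma adjD m n (A B : 'M[algC]_(m, n)) : adj (A + B) = adj A + adj B.
Proof. by apply/matrixP=> i j; rewrite !mxE rmorphD. Qed.
Lemma adjN m n (A : 'M[algC]_(m, n)) : adj (- A) = - adj A.
Proof. by apply/matrixP=> i j; rewrite !mxE rmorphN. Qed.
Lemma adjB m n (A B : 'M[algC]_(m, n)) : adj (A - B) = adj A - adj B.
Proof. by rewrite adjD adjN. Qed.
Lemma adjZ m n a (A : 'M[algC]_(m, n)) : adj (a *: A) = a^* *: adj A.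
Proof. by apply/matrixP=> i j; rewrite !mxE rmorphM. Qed.
Lemma adj1 n : adj (1%:M : 'M[algC]_n) = 1%:M.
Proof. by apply/matrixP=> i j; rewrite !mxE eq_sym conjC_nat. Qed.
Lemma adj0 m n : adj (0 : 'M[algC]_(m, n)) = 0.
Proof. by apply/matrixP=> i j; rewrite !mxE rmorph0. Qed.
Lemma adj_sum m n I (r : seq I) (P : pred I) (F : I -> 'M[algC]_(m, n)) :
  adj (\sum_(i <- r | P i) F i) = \sum_(i <- r | P i) adj (F i).
Proof.
elim/big_rec2: _ => [|i A B _ <-]; first by rewrite adj0.
by rewrite adjD.
Qed.
Lemma adj_delta m n (i : 'I_m) (j : 'I_n) : adj (delta_mx i j) = delta_mx j i.
Proof.
apply/matrixP=> a b; rewrite !mxE.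
by case: (a == j); case: (b == i); rewrite /= ?rmorph1 ?rmorph0.
Qed.
End Adj.

Definition nrm n (x : 'cV[algC]_n) := (adj x *m x) 0 0.
Lemma nrmE n (x : 'cV[algC]_n) : nrm x = \sum_i (x i 0)^* * x i 0.
Proof. by rewrite /nrm mxE; apply: eq_bigr => i _; rewrite !mxE. Qed.
Lemma nrm_ge0 n (x : 'cV[algC]_n) : 0 <= nrm x.
Proof.
rewrite nrmE sumr_ge0 // => i _; rewrite mulrC -normCK exprn_ge0 //.
Qed.
Lemma nrm_eq0 n (x : 'cV[algC]_n) : nrm x = 0 -> x = 0.
Proof.
rewrite nrmE => /eqP; rewrite psumr_eq0 => [/allP H|i _]; last first.
  by rewrite mulrC -normCK exprn_ge0.
apply/matrixP=> i j; rewrite (ord1 j) !mxE.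
have /H : i \in index_enum 'I_n by rewrite mem_index_enum.
by rewrite /= mulrC -normCK expf_eq0 /= normr_eq0 => /eqP.
Qed.

Section Lin.
Variable N : nat.
Definition lin (w : fn N) := forall (a : algC) (A B : 'M[algC]_N), w (a *: A + B) = a * w A + w B.
Variable w : fn N.
Hypothesis hw : lin w.
Lemma lin0 : w 0 = 0.
Proof.
have := hw 1 0 0; rewrite scale1r addr0 mul1r => /eqP.
by rewrite -subr_eq0 opprD addrA subrr add0r oppr_eq0 => /eqP.
Qed.
Lemma linD A B : w (A + B) = w A + w B.
Proof. by have := hw 1 A B; rewrite scale1r mul1r. Qed.
Lemma linZ a A : w (a *: A) = a * w A.
Proof. by have := hw a A 0; rewrite addr0 lin0 addr0. Qed.
Lemma linN A : w (- A) = - w A.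
Proof. by rewrite -scaleN1r linZ mulN1r. Qed.
Lemma linB A B : w (A - B) = w A - w B.
Proof. by rewrite linD linN. Qed.
Lemma lin_sum I (r : seq I) (P : pred I) (F : I -> 'M[algC]_N) :
  w (\sum_(i <- r | P i) F i) = \sum_(i <- r | P i) w (F i).
Proof.
elim/big_rec2: _ => [|i A B _ <-]; first exact: lin0.
by rewrite linD.
Qed.
Definition dens : 'M[algC]_N := \matrix_(i, j) w (delta_mx j i).
Lemma densE X : w X = \tr (dens *m X).
Proof.
rewrite {1}(matrix_sum_delta X) lin_sum.
rewrite /mxtrace; under [RHS]eq_bigr => i _ do rewrite mxE.
rewrite [RHS]exchange_big; apply: eq_bigr => i _; rewrite lin_sum.
by apply: eq_bigr => j _; rewrite linZ mxE mulrC.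
Qed.
End Lin.

Lemma tr1 (A : 'M[algC]_1) : \tr A = A 0 0.
Proof. by rewrite /mxtrace big_ord1. Qed.

Lemma vstateE N (y : 'cV[algC]_N) X : vstate y X = \tr (y *m adj y *m X).
Proof. by rewrite /vstate -tr1 mxtrace_mulC mulmxA. Qed.

Lemma vstate_lin N (y : 'cV[algC]_N) : lin (vstate y).
Proof.
move=> a A B; rewrite /vstate mulmxDr mulmxDl mxE.
by rewrite -scalemxAr -scalemxAl mxE.
Qed.

Lemma vstate_pos N (y : 'cV[algC]_N) (A : 'M[algC]_N) : 0 <= vstate y (adj A *m A).
Proof. by rewrite /vstate mulmxA -mulmxA -adjM; apply: nrm_ge0. Qed.

Lemma vstate_state N (y : 'cV[algC]_N) : unitv y -> is_state (vstate y).
Proof.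
move=> hy; split; first exact: vstate_lin.
split; first exact: vstate_pos.
by rewrite /vstate mulmx1.
Qed.

Lemma real_comb (u : algC) : (forall c, (c * u)^* = c * u) -> u = 0.
Proof.
move=> H; have := H ('i * u^*); rewrite !rmorphM /= conjCi conjCK => /eqP.
rewrite -subr_eq0 -!mulrA (mulrC u^* u) mulNr -opprD oppr_eq0 -mulr2n.
rewrite mulrn_eq0 /= mulf_eq0 (negPf (neq0Ci _)) /= mulf_eq0 conjC_eq0 orbb.
by move/eqP.
Qed.

Lemma diag_dec N (P : 'M[algC]_N) (a : 'rV[algC]_N) :
  adj P *m diag_mx a *m P = \sum_k a 0 k *: (adj (row k P) *m row k P).
Proof.
rewrite mul_mx_diag; apply/matrixP=> i j; rewrite summxE !mxE.
apply: eq_bigr => k _; rewrite !mxE big_ord1 !mxE.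
by rewrite mulrA (mulrC (a 0 k)).
Qed.

Section StateLemmas.
Variable N : nat.
Variable w : fn N.
Hypothesis hw : is_state w.
Let hl : lin w := hw.1.

Lemma st_real (A : 'M[algC]_N) : (w (adj A *m A))^* = w (adj A *m A).
Proof. exact/geC0_conj/(hw.2.1 A). Qed.

Lemma st_herm X : w (adj X) = (w X)^*.
Proof.
set a := w X; set b := w (adj X).
suff : a - b^* = 0 by move/eqP; rewrite subr_eq0 => /eqP ->; rewrite conjCK.
apply: real_comb => c; apply/CrealP.
have E : adj (1%:M + c *: X) *m (1%:M + c *: X) =
   1%:M + (c *: X + (c^* *: adj X + (c^* * c) *: (adj X *m X))).
  rewrite adjD adj1 adjZ mulmxDl !mulmxDr !mul1mx mulmx1 -!scalemxAl -scalemxAr.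
  by rewrite scalerA !addrA.
have hE := ger0_real (hw.2.1 (1%:M + c *: X)).
rewrite E !(linD hl) !(linZ hl) hw.2.2 in hE.
have hq : (c^* * c) * w (adj X *m X) \is Num.real.
  by rewrite rpredM // ?ger0_real // ?hw.2.1 // mulrC mul_conjC_ge0.
have hs : c * a + c^* * b \is Num.real.
  have -> : c * a + c^* * b = (1 + (c * a + (c^* * b + c^* * c * w (adj X *m X))))
       - 1 - c^* * c * w (adj X *m X).
    by rewrite (addrC 1) addrK addrA addrK.
  by apply: rpredB => //; apply: rpredB => //; apply: rpred1.
have hr : c * b^* + c^* * b \is Num.real.
  by apply/CrealP; rewrite rmorphD !rmorphM /= !conjCK addrC.
have -> : c * (a - b^*) = (c * a + c^* * b) - (c * b^* + c^* * b).
  by rewrite opprD addrACA subrr addr0 mulrBr.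
exact: rpredB.
Qed.

Lemma dens_herm : adj (dens w) = dens w.
Proof.
apply/matrixP=> i j; rewrite !mxE -st_herm.
by rewrite adj_delta.
Qed.

Lemma entry_adj_row M (P : 'M[algC]_(M, N)) (D : 'M[algC]_N) k :
  (row k P *m D *m adj (row k P)) 0 0 = (P *m D *m adj P) k k.
Proof.
rewrite !mxE; apply: eq_bigr => j _; rewrite !mxE; congr (_ * _).
by apply: eq_bigr => i _; rewrite !mxE.
Qed.

Lemma st_dec : exists P : 'M[algC]_N, P *m adj P = 1%:M /\ adj P *m P = 1%:M /\
  exists d : 'I_N -> algC, (forall k, 0 <= d k) /\ (\sum_k d k) = 1 /\
    dens w = adj P *m diag_mx (\row_k d k) *m P /\
    (forall k, d k = w (adj (row k P) *m row k P)) /\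
    (forall k, unitv (adj (row k P))) /\
    (forall X, w X = (\sum_k d k * vstate (adj (row k P)) X)).
Proof.
set D := dens w.
have hD : D \is normalmx by apply/normalmxP; rewrite -/(adj D) dens_herm.
have /orthomx_spectralP E := hD.
set P := spectralmx D in E; set sp := spectral_diag D in E.
have Pu : P *m adj P = 1%:M by apply/unitarymxP/spectral_unitarymx.
have iP : invmx P = adj P by apply: invmx_unitary; apply: spectral_unitarymx.
have Pu' : adj P *m P = 1%:M by rewrite -iP mulVmx // spectral_unit.
rewrite iP in E.
have hdiag : P *m D *m adj P = diag_mx sp.
  by rewrite E !mulmxA Pu mul1mx -mulmxA Pu mulmx1.
exists P; split => //; split => //.
have hdk : forall k, sp 0 k = vstate (adj (row k P)) D.
  by move=> k; rewrite /vstate adjK entry_adj_row hdiag mxE eqxx mulr1n.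
have hunit : forall k, adj (adj (row k P)) *m adj (row k P) = 1%:M.
  move=> k; apply/matrixP=> a b; rewrite (ord1 a) (ord1 b) adjK.
  have := entry_adj_row P 1%:M k; rewrite !mulmx1 Pu => ->.
  by rewrite !mxE !eqxx.
have hdec : D = \sum_k sp 0 k *: (adj (row k P) *m row k P).
  by rewrite {1}E diag_dec.
have hsum : forall X, w X = \sum_k sp 0 k * vstate (adj (row k P)) X.
  move=> X; rewrite (densE hl) -/D hdec mulmx_suml raddf_sum /=.
  apply: eq_bigr => k _; rewrite -scalemxAl mxtraceZ vstateE adjK //.
have hdk' : forall k, sp 0 k = w (adj (row k P) *m row k P).
  by move=> k; rewrite hdk vstateE mxtrace_mulC -(densE hl) adjK.
exists (fun k => sp 0 k); split.
  move=> k; rewrite hdk'.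
  set y := adj (row k P); rewrite -[row k P]adjK -/y.
  have -> : y *m adj y = adj (y *m adj y) *m (y *m adj y).
    by rewrite adjM adjK mulmxA -(mulmxA y) hunit mulmx1.
  exact: hw.2.1.
split.
  have := hsum 1%:M; rewrite hw.2.2 => ->.
  by apply: eq_bigr => k _; rewrite /vstate mulmx1 hunit mxE eqxx mulr1.
split.
  rewrite -/D {1}E; congr (_ *m diag_mx _ *m _).
  by apply/rowP=> k; rewrite !mxE.
split => //; split => //.
by move=> k; rewrite /unitv hunit mxE eqxx.
Qed.

End StateLemmas.

Section Tens.
Variables m n : nat.
Implicit Types (x : 'cV[algC]_m) (y : 'cV[algC]_n).

Lemma tensvD x y1 y2 : tensv x (y1 + y2) = tensv x y1 + tensv x y2.
Proof. by rewrite /tensv linearD /= mulmxDr linearD /= linearD. Qed.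
Lemma tensvZ x a y : tensv x (a *: y) = a *: tensv x y.
Proof. by rewrite /tensv linearZ /= -scalemxAr linearZ /= linearZ. Qed.
Lemma tensvZl x a y : tensv (a *: x) y = a *: tensv x y.
Proof. by rewrite /tensv -(scalemxAl a x) linearZ /= linearZ. Qed.
Lemma tensv0 x : tensv x (0 : 'cV[algC]_n) = 0.
Proof. by rewrite /tensv trmx0 mulmx0 linear0 trmx0. Qed.
Lemma tensv_sum x I (r : seq I) (P : pred I) (F : I -> 'cV[algC]_n) :
  tensv x (\sum_(i <- r | P i) F i) = \sum_(i <- r | P i) tensv x (F i).
Proof.
elim/big_rec2: _ => [|i A B _ <-]; first exact: tensv0.
by rewrite tensvD.
Qed.

Lemma adj_tensv x y : adj (tensv x y) = mxvec ((adj x)^T *m adj y).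
Proof.
rewrite /adj /tensv trmxK map_mxvec; congr mxvec.
by rewrite map_mxM map_trmx !trmxK.
Qed.

Lemma nrm_tensv x y : nrm (tensv x y) = nrm x * nrm y.
Proof.
rewrite /nrm adj_tensv /tensv mxvec_dotmul !mulmxA -mulmxA.
rewrite mxE big_ord1; congr (_ * _).
by rewrite -trmx_mul mxE.
Qed.
End Tens.

Lemma vstate_scale N (a : algC) (z : 'cV[algC]_N) :
  a^* * a = 1 -> vstate (a *: z) = vstate z.
Proof.
move=> ha; apply: functional_extensionality => X.
rewrite /vstate adjZ -scalemxAl -scalemxAl -scalemxAr !mxE.
by rewrite mulrA ha mul1r.
Qed.

Lemma conv_sum N (C : fn N -> Prop) : is_convex C ->
  forall k (l : 'I_k -> algC) (s : 'I_k -> fn N),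
  (forall i, 0 <= l i) -> \sum_i l i = 1 -> (forall i, C (s i)) ->
  C (fun X => \sum_i l i * s i X).
Proof.
move=> hC; elim=> [|k IH] l s l0 l1 sC.
  by move: l1; rewrite big_ord0 => /esym/eqP; rewrite oner_eq0.
move: l1; rewrite big_ord_recr /= => l1.
set R := \sum_(i < k) l (widen_ord (leqnSn k) i) in l1.
have R0 : 0 <= R by apply: sumr_ge0 => i _.
have E : R = 1 - l ord_max by rewrite -l1 addrK.
have [lm1|lm1] := eqVneq (l ord_max) 1.
  have R00 : R = 0 by rewrite E lm1 subrr.
  have z : forall i : 'I_k, l (widen_ord (leqnSn k) i) = 0.
    move=> i; move/eqP: R00; rewrite psumr_eq0 // => /allP /(_ i).
    by rewrite mem_index_enum => /(_ isT) /implyP /(_ isT) /eqP.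
  suff -> : (fun X => \sum_i l i * s i X) = s ord_max by apply: sC.
  apply: functional_extensionality => X; rewrite big_ord_recr /= lm1 mul1r.
  by rewrite big1 ?add0r // => i _; rewrite z mul0r.
have Rn0 : R != 0 by rewrite E subr_eq0 eq_sym.
have Cg : C (fun X => \sum_i l (widen_ord (leqnSn k) i) / R * s (widen_ord (leqnSn k) i) X).
  apply: (IH (fun i => l (widen_ord (leqnSn k) i) / R) (fun i => s (widen_ord (leqnSn k) i))).
  - by move=> i; rewrite divr_ge0.
  - by rewrite -mulr_suml -/R divff.
  - by move=> i; apply: sC.
have lm01 : 0 <= l ord_max <= 1 by rewrite l0 /= -subr_ge0 -E.
have := hC _ _ _ (sC ord_max) Cg lm01.
suff -> : cc (l ord_max) (s ord_max)
  (fun X => \sum_i l (widen_ord (leqnSn k) i) / R * s (widen_ord (leqnSn k) i) X)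
  = (fun X => \sum_i l i * s i X) by [].
apply: functional_extensionality => X; rewrite /cc big_ord_recr /= addrC.
congr (_ + _); rewrite -E mulr_sumr; apply: eq_bigr => i _.
by rewrite mulrA mulrCA divff // mulr1.
Qed.

Lemma K_convex N : is_convex (@K N).
Proof.
move=> w1 w2 t [l1 [p1 u1]] [l2 [p2 u2]] /andP[t0 t1]; split.
  move=> a A B; rewrite /cc l1 l2.
  rewrite !mulrDr !mulrA (mulrC t a) (mulrC (1 - t) a) -!mulrA.
  by rewrite addrACA -!mulrDr.
split; last by rewrite /cc u1 u2 !mulr1 subrKC.
move=> A; rewrite /cc addr_ge0 ?mulr_ge0 ?subr_ge0 //.
Qed.

Lemma vstate_adj N M (y : 'cV[algC]_N) (A : 'M[algC]_(M, N)) :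
  vstate y (adj A *m A) = nrm (A *m y).
Proof. by rewrite /vstate /nrm mulmxA -mulmxA -adjM. Qed.

Lemma nrm_scale N (c : algC) (x : 'cV[algC]_N) : nrm (c *: x) = c^* * c * nrm x.
Proof.
by rewrite /nrm adjZ -scalemxAl -scalemxAr scalerA mxE.
Qed.

Lemma Sep_K m n (w : fn (m * n)) : Sep w -> K w.
Proof.
move=> [k [l [x [y [l0 [l1 [hu hw]]]]]]].
have -> : w = (fun X => \sum_i l i * vstate (tensv (x i) (y i)) X).
  by apply: functional_extensionality => X; rewrite hw.
apply: conv_sum => //; first exact: K_convex.
move=> i; apply: vstate_state; rewrite /unitv -/(nrm _) nrm_tensv.
by rewrite /nrm (hu i).1 (hu i).2 mulr1.
Qed.

Lemma ext01 (t a b : algC) : 0 < t < 1 -> 0 <= a <= 1 -> 0 <= b <= 1 ->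
  t * a + (1 - t) * b = 1 -> a = 1 /\ b = 1.
Proof.
move=> /andP[t0 t1] /andP[a0 a1] /andP[b0 b1] E.
have E2 : t * (1 - a) + (1 - t) * (1 - b) = 0.
  rewrite !mulrBr !mulr1 addrACA -opprD E.
  by rewrite (addrC t) subrK subrr.
move/eqP: E2; rewrite paddr_eq0; last 2 first.
- by apply: mulr_ge0; [exact: ltW | rewrite subr_ge0].
- by apply: mulr_ge0; rewrite subr_ge0 // ltW.
rewrite !mulf_eq0 (gt_eqF t0) /= [1 - t == 0]subr_eq0 (eq_sym 1 t) (lt_eqF t1) /=.
by rewrite !subr_eq0 => /andP[/eqP <- /eqP <-].
Qed.

Lemma tr_adj_ge0 M N (A : 'M[algC]_(M, N)) : 0 <= \tr (adj A *m A).
Proof.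
rewrite /mxtrace sumr_ge0 // => i _; rewrite mxE sumr_ge0 // => j _.
by rewrite !mxE mulrC mul_conjC_ge0.
Qed.

Definition psd N (M : 'M[algC]_N) := forall A : 'M[algC]_N, 0 <= \tr (M *m (adj A *m A)).

Lemma psd_adj M N (E : 'M[algC]_(M, N)) : psd (adj E *m E).
Proof.
move=> A.
have -> : \tr (adj E *m E *m (adj A *m A)) = \tr (adj (A *m adj E) *m (A *m adj E)).
  rewrite adjM adjK [LHS]mxtrace_mulC [RHS]mxtrace_mulC !mulmxA.
  by rewrite [RHS]mxtrace_mulC !mulmxA.
exact: tr_adj_ge0.
Qed.

Lemma psd0 N : psd (0 : 'M[algC]_N).
Proof. by move=> A; rewrite mul0mx mxtrace0. Qed.

Lemma psdD N (M1 M2 : 'M[algC]_N) : psd M1 -> psd M2 -> psd (M1 + M2).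
Proof. by move=> h1 h2 A; rewrite mulmxDl mxtraceD addr_ge0. Qed.

Lemma psdZ N c (M : 'M[algC]_N) : 0 <= c -> psd M -> psd (c *: M).
Proof. by move=> c0 h A; rewrite -scalemxAl mxtraceZ mulr_ge0. Qed.

Lemma psd_sum N I (r : seq I) (P : pred I) (F : I -> 'M[algC]_N) :
  (forall i, P i -> psd (F i)) -> psd (\sum_(i <- r | P i) F i).
Proof.
move=> h; elim/big_rec: _ => [|i M Pi hM]; first exact: psd0.
exact: psdD (h i Pi) hM.
Qed.

Lemma psd_diag N (P : 'M[algC]_N) (a : 'rV[algC]_N) :
  (forall k, 0 <= a 0 k) -> psd (adj P *m diag_mx a *m P).
Proof.
move=> ha; rewrite diag_dec; apply: psd_sum => k _.
by apply: psdZ => //; apply: psd_adj.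
Qed.

Section Main.
Variables (m n p : nat) (hp : (0 < p)%N).
Variables (e : 'I_p -> 'cV[algC]_m) (f : 'I_p -> 'cV[algC]_n).
Hypothesis he : forall i, unitv (e i).
Hypothesis hf : forall i, unitv (f i).
Hypothesis hsame : forall i, ((e i)^T == (e (Ordinal hp))^T)%MS.

Let i0 := Ordinal hp.
Let e0 := e i0.
Let V := Lmx e0 f.
Let B := schmidt (row_base V).
Let U := B^T.
Let Q := U *m adj U.
Let h i := tensv e0 (f i).

Lemma UU : adj U *m U = 1%:M.
Proof.
have /unitarymxP hB : B \is unitarymx by apply: schmidt_unitarymx; apply: rank_leq_col.
have := congr1 trmx hB; rewrite trmx_mul trmx1 => <-.
by rewrite /U /adj !map_trmx !trmxK.
Qed.

Lemma BV : (B :=: V)%MS.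
Proof.
apply: eqmx_trans (eq_row_base V).
by apply: eqmx_schmidt_free; apply: row_base_free.
Qed.

Lemma Q_adj : adj Q = Q.
Proof. by rewrite /Q adjM adjK. Qed.

Lemma QQ : Q *m Q = Q.
Proof. by rewrite /Q !mulmxA -(mulmxA U) UU mulmx1. Qed.

Lemma QLP (z : 'cV[algC]_(m * n)) : Q *m z = z <-> (z^T <= V)%MS.
Proof.
split.
  move=> hz; rewrite -hz /Q -mulmxA trmx_mul /U trmxK -BV.
  exact: submxMl.
rewrite -BV => /mulmxKpV hz.
have -> : z = U *m (z^T *m pinvmx B)^T.
  by rewrite /U -trmx_mul hz trmxK.
by rewrite /Q -mulmxA (mulmxA (adj U)) UU mul1mx.
Qed.

Definition gL (z : 'cV[algC]_(m * n)) : 'cV[algC]_n :=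
  \sum_i (z^T *m pinvmx V) 0 i *: f i.

Lemma gLP z : Q *m z = z -> z = tensv e0 (gL z).
Proof.
move=> /QLP /mulmxKpV hz.
apply: trmx_inj; rewrite -{1}hz mulmx_sum_row /gL tensv_sum.
rewrite raddf_sum /=; apply: eq_bigr => i _.
by rewrite tensvZ linearZ /= rowK.
Qed.

Lemma Qh i : Q *m h i = h i.
Proof.
apply/QLP; have -> : (h i)^T = row i V by rewrite rowK.
exact: row_sub.
Qed.

Lemma e0u : unitv e0.
Proof. exact: he. Qed.

Lemma nrm_h i : nrm (h i) = 1.
Proof. by rewrite /h nrm_tensv /nrm e0u hf mulr1. Qed.

Lemma gen_h i : vstate (tensv (e i) (f i)) = vstate (h i).
Proof.
have /andP[s1 _] := hsame i.
have hz := mulmxKpV s1.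
set c := ((e i)^T *m pinvmx (e0^T)) 0 0.
have ec : e i = c *: e0.
  apply: trmx_inj; rewrite -hz linearZ /=.
  by rewrite [_ *m pinvmx _]mx11_scalar mul_scalar_mx.
have hc : c^* * c = 1.
  have := he i; rewrite /unitv -/(nrm _) ec nrm_scale.
  by rewrite /nrm e0u mulr1.
by rewrite ec tensvZl vstate_scale.
Qed.

Lemma IQ_adj : adj (1%:M - Q) *m (1%:M - Q) = 1%:M - Q.
Proof.
by rewrite adjB adj1 Q_adj mulmxBl !mulmxBr !mul1mx !mulmx1 QQ subrr subr0.
Qed.

Lemma st_Q (w : fn (m * n)) : is_state w -> 0 <= w Q <= 1.
Proof.
move=> hw; apply/andP; split.
  have -> : Q = adj Q *m Q by rewrite Q_adj QQ.
  exact: hw.2.1.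
rewrite -subr_ge0 -hw.2.2 -(linB hw.1) -IQ_adj.
exact: hw.2.1.
Qed.

Lemma vstate_Q1 (y : 'cV[algC]_(m * n)) : unitv y -> vstate y Q = 1 -> Q *m y = y.
Proof.
move=> hy hQ.
have : nrm ((1%:M - Q) *m y) = 0.
  rewrite -vstate_adj IQ_adj (linB (vstate_lin y)) hQ.
  by rewrite /vstate mulmx1 hy subrr.
move/nrm_eq0/eqP; rewrite mulmxBl mul1mx subr_eq0 => /eqP <- //.
Qed.

Lemma st_L (w : fn (m * n)) : is_state w -> w Q = 1 ->
  exists (d : 'I_(m * n) -> algC) (z : 'I_(m * n) -> 'cV[algC]_(m * n)),
    (forall k, 0 <= d k) /\ \sum_k d k = 1 /\
    (forall k, unitv (z k) /\ Q *m z k = z k) /\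
    (forall X, w X = \sum_k d k * vstate (z k) X).
Proof.
move=> hw wQ.
have [P [_ [_ [d [d0 [d1 [_ [_ [du dsum]]]]]]]]] := st_dec hw.
set y := fun k => adj (row k P).
have vQ k : 0 <= vstate (y k) Q <= 1 by apply: st_Q; apply: vstate_state; apply: du.
have hz : forall k, d k * (1 - vstate (y k) Q) = 0.
  have : \sum_k d k * (1 - vstate (y k) Q) = 0.
    under eq_bigr => k _ do rewrite mulrBr mulr1.
    by rewrite sumrB d1 -dsum wQ subrr.
  move/eqP; rewrite psumr_eq0 => [/allP H k|k _]; last first.
    by rewrite mulr_ge0 // subr_ge0; case/andP: (vQ k).
  by apply/eqP; have := H k (mem_index_enum _); rewrite implyTb.
exists d, (fun k => if d k == 0 then h i0 else y k).
split => //; split => //; split.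
  move=> k; case: eqP => dk.
    by split; [rewrite /unitv -/(nrm _) nrm_h | apply: Qh].
  split; first exact: du.
  apply: vstate_Q1; first exact: du.
  move: (hz k) => /eqP; rewrite mulf_eq0 => /orP[/eqP //|].
  by rewrite subr_eq0 => /eqP <-.
move=> X; rewrite dsum; apply: eq_bigr => k _.
by case: eqP => [->|]; rewrite ?mul0r.
Qed.

Lemma st_Sep (w : fn (m * n)) : is_state w -> w Q = 1 -> Sep w.
Proof.
move=> hw wQ; have [d [z [d0 [d1 [hz hsum]]]]] := st_L hw wQ.
exists (m * n)%N, d, (fun _ => e0), (fun k => gL (z k)).
split => //; split => //; split.
  move=> k; split; first exact: e0u.
  have := (hz k).1; rewrite /unitv -!/(nrm _) {1}(gLP (hz k).2) nrm_tensv.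
  by rewrite /nrm e0u mul1r.
by move=> X; rewrite hsum; apply: eq_bigr => k _; rewrite -gLP //; case: (hz k).
Qed.

Definition G0 (w : fn (m * n)) := K w /\ w Q = 1.

Lemma G0_convex : is_convex G0.
Proof.
move=> w1 w2 t [k1 q1] [k2 q2] ht; split; first exact: K_convex.
by rewrite /cc q1 q2 !mulr1 subrKC.
Qed.

Lemma G0_face : is_face (@Sep m n) G0.
Proof.
split; first by move=> w [hk hq]; apply: st_Sep.
split; first exact: G0_convex.
move=> w1 w2 t s1 s2 ht [hk hq].
have k1 := Sep_K s1; have k2 := Sep_K s2.
have [a1 b1] := ext01 ht (st_Q k1) (st_Q k2) hq.
by split; split.
Qed.

Lemma gen_G0 i : G0 (vstate (tensv (e i) (f i))).
Proof.
rewrite gen_h; split; first by apply: vstate_state; rewrite /unitv -/(nrm _) nrm_h.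
by rewrite /vstate -mulmxA Qh -/(nrm _) nrm_h.
Qed.

Lemma dec_Q k0 (d : 'I_k0 -> algC) (y : 'I_k0 -> 'cV[algC]_(m * n)) :
  (forall k, 0 <= d k) -> (forall k, unitv (y k)) -> \sum_k d k = 1 ->
  \sum_k d k * vstate (y k) Q = 1 -> forall k, d k != 0 -> Q *m y k = y k.
Proof.
move=> d0 du d1 dsum.
have vQ k : 0 <= vstate (y k) Q <= 1 by apply: st_Q; apply: vstate_state; apply: du.
have hz : forall k, d k * (1 - vstate (y k) Q) = 0.
  have : \sum_k d k * (1 - vstate (y k) Q) = 0.
    under eq_bigr => k _ do rewrite mulrBr mulr1.
    by rewrite sumrB d1 dsum subrr.
  move/eqP; rewrite psumr_eq0 => [/allP H k|k _]; last first.
    by rewrite mulr_ge0 // subr_ge0; case/andP: (vQ k).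
  by apply/eqP; have := H k (mem_index_enum _); rewrite implyTb.
move=> k dk; apply: vstate_Q1; first exact: du.
move: (hz k) => /eqP; rewrite mulf_eq0 (negPf dk) /=.
by rewrite subr_eq0 => /eqP <-.
Qed.

Lemma L_row (R : 'rV[algC]_(m * n)) (z : 'cV[algC]_(m * n)) :
  (forall i, R *m h i = 0) -> Q *m z = z -> R *m z = 0.
Proof.
move=> hR /gLP ->; rewrite /gL tensv_sum mulmx_sumr big1 // => i _.
by rewrite tensvZ -scalemxAr hR scaler0.
Qed.

Lemma diag_adj N (P : 'M[algC]_N) (a : 'rV[algC]_N) :
  (forall k, (a 0 k)^* = a 0 k) ->
  adj (adj P *m diag_mx a *m P) = adj P *m diag_mx a *m P.
Proof.
move=> ha; rewrite !adjM adjK mulmxA.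
have -> : adj (diag_mx a) = diag_mx a.
  apply/matrixP=> i j; rewrite !mxE eq_sym.
  by case: eqP => [->|_]; [rewrite !mulr1n ha | rewrite !mulr0n rmorph0].
by [].
Qed.

Lemma diag_idem N (P : 'M[algC]_N) (a : 'rV[algC]_N) :
  P *m adj P = 1%:M -> (forall k, a 0 k * a 0 k = a 0 k) ->
  (adj P *m diag_mx a *m P) *m (adj P *m diag_mx a *m P) = adj P *m diag_mx a *m P.
Proof.
move=> hP ha.
have -> : adj P *m diag_mx a *m P *m (adj P *m diag_mx a *m P) =
  adj P *m (diag_mx a *m (P *m adj P) *m diag_mx a) *m P by rewrite !mulmxA.
rewrite hP mulmx1 mulmx_diag; congr (_ *m diag_mx _ *m _).
by apply/rowP=> k; rewrite mxE ha.
Qed.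

Lemma chi_idem (b : bool) : (b%:R : algC) * b%:R = b%:R.
Proof. by case: b; rewrite ?mulr1 ?mulr0. Qed.

Lemma chi_real (b : bool) : (b%:R : algC)^* = b%:R.
Proof. exact: conjC_nat. Qed.

Definition genS (v : fn (m * n)) := exists i, v = vstate (tensv (e i) (f i)).

Lemma st_F (w : fn (m * n)) : is_state w -> w Q = 1 ->
  forall G, is_face (@Sep m n) G -> (forall v, genS v -> G v) -> G w.
Proof.
move=> hw wQ G [GS [Gc Gf]] Ggen.
set r0 := fun X => \sum_i p%:R^-1 * vstate (tensv (e i) (f i)) X.
have pn0 : (p%:R : algC) != 0 by rewrite pnatr_eq0 -lt0n.
have pw0 : forall i : 'I_p, 0 <= (p%:R : algC)^-1 by move=> i; rewrite invr_ge0 ler0n.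
have pw1 : \sum_(i < p) (p%:R : algC)^-1 = 1.
  by rewrite sumr_const card_ord -[LHS]mulr_natr mulVf.
have r0G : G r0.
  by apply: conv_sum => // i; apply: Ggen; exists i.
have [r0s r0Q] : G0 r0.
  by apply: conv_sum => //; [exact: G0_convex | move=> i; apply: gen_G0].
have [P0 [P0u [P0u' [d [d0 [d1 [D0 [dk [du0 dsum0]]]]]]]]] := st_dec r0s.
have [P1 [P1u [P1u' [c [c0 [c1 [D1 [ck [cu1 csum1]]]]]]]]] := st_dec hw.
have s1 : forall k, d k = 0 -> forall i, row k P0 *m h i = 0.
  move=> k dk0 i; apply: nrm_eq0.
  have : \sum_i p%:R^-1 * nrm (row k P0 *m h i) = 0.
    have := dk k; rewrite dk0 /r0 /= => E0; rewrite [RHS]E0; apply: eq_bigr => j _.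
    by rewrite gen_h vstate_adj.
  move/eqP; rewrite psumr_eq0 => [/allP H|j _]; last by apply: mulr_ge0; [apply: (pw0 j) | apply: nrm_ge0].
  have := H i (mem_index_enum _); rewrite implyTb mulf_eq0 invr_eq0 (negPf pn0) /=.
  by move/eqP.
set chi := \row_k ((d k != 0)%:R : algC).
set Pi := adj P0 *m diag_mx chi *m P0.
have s2 : forall z : 'cV[algC]_(m * n), Q *m z = z -> Pi *m z = z.
  move=> z hz.
  rewrite -[RHS]mul1mx -P0u' /Pi -!mulmxA; congr (_ *m _).
  apply/colP => k; rewrite mul_diag_mx !mxE.
  have [dk0|dk0] := eqVneq (d k) 0; last by rewrite mul1r.
  rewrite mul0r.
  have := L_row (s1 k dk0) hz; rewrite -row_mul => /matrixP /(_ 0 0).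
  by rewrite !mxE => ->.
set chi' := \row_l ((c l != 0)%:R : algC).
set Pi' := adj P1 *m diag_mx chi' *m P1.
have s3 : forall l, c l != 0 -> Q *m adj (row l P1) = adj (row l P1).
  by apply: (dec_Q c0 cu1 c1); rewrite -csum1 wQ.
have PiPi' : Pi *m Pi' = Pi'.
  rewrite /Pi' diag_dec mulmx_sumr; apply: eq_bigr => l _; rewrite mxE.
  rewrite -scalemxAr mulmxA; have [cl0|cl0] := eqVneq (c l) 0.
    by rewrite /= !scale0r.
  by rewrite /= s2 // s3.
have Pi_adj : adj Pi = Pi by apply: diag_adj => k; rewrite mxE chi_real.
have Pi'_adj : adj Pi' = Pi' by apply: diag_adj => k; rewrite mxE chi_real.
have PiPi : Pi *m Pi = Pi by apply: diag_idem => // k; rewrite mxE chi_idem.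
have Pi'Pi' : Pi' *m Pi' = Pi' by apply: diag_idem => // k; rewrite mxE chi_idem.
have Pi'Pi : Pi' *m Pi = Pi'.
  by have := congr1 (@adj _ _) PiPi'; rewrite adjM Pi_adj Pi'_adj.
have psdPP : psd (Pi - Pi').
  have -> : Pi - Pi' = adj (Pi - Pi') *m (Pi - Pi').
    rewrite adjB Pi_adj Pi'_adj mulmxBl !mulmxBr PiPi PiPi' Pi'Pi Pi'Pi'.
    by rewrite subrr subr0.
  exact: psd_adj.
have dle1 : forall k, d k <= 1.
  by move=> k; rewrite -d1 (bigD1 k) //= lerDl sumr_ge0.
have cle1 : forall k, c k <= 1.
  by move=> k; rewrite -c1 (bigD1 k) //= lerDl sumr_ge0.
set dm := \prod_(k | d k != 0) d k.
have dm0 : 0 < dm by apply: prodr_gt0 => k dk1; rewrite lt0r dk1 d0.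
have dm1 : dm <= 1 by apply: prodr_ile1 => k _; rewrite d0 dle1.
have dmk : forall k, d k != 0 -> dm <= d k.
  move=> k dk1; rewrite /dm (bigD1 k) //=; apply: ler_piMr => //.
  by apply: prodr_ile1 => j _; rewrite d0 dle1.
set t := dm / 2.
have t0 : 0 < t by have := (midf_lt dm0).1; rewrite add0r.
have tdm : t < dm by have := (midf_lt dm0).2; rewrite add0r.
have t1 : t < 1 by apply: lt_le_trans tdm dm1.
have E1 : adj P0 *m diag_mx (\row_k (d k - t * chi 0 k)) *m P0 = dens r0 - t *: Pi.
  rewrite D0 /Pi !diag_dec scaler_sumr -sumrB; apply: eq_bigr => k _.
  by rewrite !mxE scalerBl scalerA.
have E2 : adj P1 *m diag_mx (\row_l (chi' 0 l - c l)) *m P1 = Pi' - dens w.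
  rewrite D1 /Pi' !diag_dec -sumrB; apply: eq_bigr => k _.
  by rewrite !mxE scalerBl.
have Mdec : dens r0 - t *: dens w =
  adj P0 *m diag_mx (\row_k (d k - t * chi 0 k)) *m P0 + t *: (Pi - Pi') +
  t *: (adj P1 *m diag_mx (\row_l (chi' 0 l - c l)) *m P1).
  by rewrite E1 E2 !scalerBr !addrA subrK subrK.
have Mpsd : psd (dens r0 - t *: dens w).
  rewrite Mdec; apply: psdD; [apply: psdD|].
  - apply: psd_diag => k; rewrite !mxE.
    have [dk0|dk0] := eqVneq (d k) 0; first by rewrite /= mulr0 subr0.
    by rewrite /= mulr1 subr_ge0 (le_trans (ltW tdm) (dmk k dk0)).
  - by apply: psdZ => //; apply: ltW.
  - apply: psdZ; first exact: ltW.
    apply: psd_diag => l; rewrite !mxE.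
    have [cl0|cl0] := eqVneq (c l) 0; first by rewrite /= cl0 subrr.
    by rewrite /= subr_ge0 cle1.
have t1n0 : 1 - t != 0 by rewrite subr_eq0 eq_sym (lt_eqF t1).
set sg := fun X => (r0 X - t * w X) / (1 - t).
have sgs : is_state sg.
  split.
    move=> a A1 B1; rewrite /sg r0s.1 hw.1 mulrA -mulrDl; congr (_ / _).
    by rewrite mulrDr opprD addrACA mulrBr (mulrCA a t).
  split.
    move=> A; rewrite /sg; apply: divr_ge0; last by rewrite subr_ge0 ltW.
    rewrite (densE r0s.1) (densE hw.1) -mxtraceZ -raddfB /= scalemxAl -mulmxBl.
    exact: Mpsd.
  by rewrite /sg r0s.2.2 hw.2.2 mulr1 divff.
have sgQ : sg Q = 1 by rewrite /sg r0Q wQ mulr1 divff.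
have Ssg := st_Sep sgs sgQ.
have Sw := st_Sep hw wQ.
have Ecc : r0 = cc t w sg.
  apply: functional_extensionality => X.
  by rewrite /cc /sg mulrCA divff // mulr1 addrC subrK.
have tt : 0 < t < 1 by rewrite t0 t1.
have Gcc : G (cc t w sg) by rewrite -Ecc.
by case: (Gf w sg t Sw Ssg tt Gcc).
Qed.

Lemma vstate_QXQ N (q X : 'M[algC]_N) (z : 'cV[algC]_N) :
  adj z *m q = adj z -> q *m z = z -> vstate z (q *m X *m q) = vstate z X.
Proof.
move=> h1 h2; rewrite /vstate.
have -> : adj z *m (q *m X *m q) *m z = (adj z *m q) *m X *m (q *m z).
  by rewrite !mulmxA.
by rewrite h1 h2.
Qed.

Lemma st_pos_rect N (v : fn N) k (M : 'M[algC]_(k, N)) :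
  is_state v -> 0 <= v (adj M *m M).
Proof.
move=> hv; have [P [_ [_ [d [d0 [_ [_ [_ [_ hsum]]]]]]]]] := st_dec hv.
rewrite hsum sumr_ge0 // => j _; rewrite vstate_adj mulr_ge0 ?nrm_ge0 //.
Qed.

Let Fs := face_gen (@Sep m n) genS.

Lemma F_char w : Fs w <-> (K w /\ w Q = 1).
Proof.
split.
  move=> hF; apply: (hF G0 G0_face) => v [i ->]; exact: gen_G0.
by move=> [hk hq] G hG hgen; apply: st_F.
Qed.

Lemma F_face : is_face (@K (m * n)) Fs.
Proof.
split; first by move=> w /F_char [].
split.
  move=> w1 w2 t /F_char h1 /F_char h2 ht; apply/F_char.
  exact: G0_convex h1 h2 ht.
move=> w1 w2 t k1 k2 ht /F_char [kc qc].
have [a1 b1] := ext01 ht (st_Q k1) (st_Q k2) qc.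
by split; apply/F_char.
Qed.

Lemma F_QXQ w X : Fs w -> w (Q *m X *m Q) = w X.
Proof.
move=> /F_char [hk hq]; have [d [z [d0 [d1 [hz hsum]]]]] := st_L hk hq.
rewrite !hsum; apply: eq_bigr => k _; congr (_ * _).
have hQz := (hz k).2.
have hzQ : adj (z k) *m Q = adj (z k) by rewrite -Q_adj -adjM hQz.
exact: vstate_QXQ.
Qed.

Definition phi (w : fn (m * n)) : fn (\rank V) := fun A => w (U *m A *m adj U).

Lemma phi_state w : Fs w -> K (phi w).
Proof.
move=> /F_char [hk hq]; split.
  move=> a A1 B1; rewrite /phi mulmxDr mulmxDl -scalemxAr -scalemxAl.
  exact: hk.1.
split.
  move=> A; rewrite /phi.
  have -> : U *m (adj A *m A) *m adj U = adj (A *m adj U) *m (A *m adj U).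
    by rewrite adjM adjK !mulmxA.
  exact: st_pos_rect.
by rewrite /phi mulmx1.
Qed.

Lemma affine_F : affine_iso Fs (@K (\rank V)).
Proof.
exists phi; split; first exact: phi_state.
split.
  move=> w1 w2 h1 h2 E; apply: functional_extensionality => X.
  rewrite -(F_QXQ X h1) -(F_QXQ X h2).
  have -> : Q *m X *m Q = U *m (adj U *m X *m U) *m adj U by rewrite !mulmxA.
  by have := congr1 (fun g => g (adj U *m X *m U)) E.
split; last by [].
move=> v hv.
set w := fun X => v (adj U *m X *m U).
have hk : K w.
  split.
    move=> a A1 B1; rewrite /w mulmxDr mulmxDl -scalemxAr -scalemxAl.
    exact: hv.1.
  split.
    move=> A; rewrite /w.
    have -> : adj U *m (adj A *m A) *m U = adj (A *m U) *m (A *m U).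
      by rewrite adjM !mulmxA.
    exact: st_pos_rect.
  by rewrite /w mulmx1 UU hv.2.2.
have hq : w Q = 1 by rewrite /w /Q !mulmxA UU mul1mx UU hv.2.2.
exists w; split; first by apply/F_char.
apply: functional_extensionality => A.
by rewrite /phi /w !mulmxA UU mul1mx -mulmxA UU mulmx1.
Qed.

Lemma main_part :
  is_face (@K (m * n)) Fs /\
  (exists Q : 'M[algC]_(m * n),
     adj Q = Q /\ Q *m Q = Q /\
     (forall z : 'cV[algC]_(m * n), Q *m z = z <-> (z^T <= V)%MS) /\
     (forall w, Fs w <-> (K w /\ w Q = 1))) /\
  affine_iso Fs (@K (\rank V)).
Proof.
split; first exact: F_face.
split; last exact: affine_F.
exists Q; split; first exact: Q_adj.
split; first exact: QQ.
split; first exact: QLP.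
exact: F_char.
Qed.
End Main.
Theorem mainTheorem3 (m n p : nat) (hp : (0 < p)%N)
  (e : 'I_p -> 'cV[algC]_m) (f : 'I_p -> 'cV[algC]_n) :
  (forall i, unitv (e i)) -> (forall i, unitv (f i)) ->
  (forall i, ((e i)^T == (e (Ordinal hp))^T)%MS) ->
  let F := face_gen (@Sep m n) (fun w => exists i, w = vstate (tensv (e i) (f i))) in
  let V := Lmx (e (Ordinal hp)) f in
  is_face (@K (m * n)) F /\
  (exists Q : 'M[algC]_(m * n),
     adj Q = Q /\ Q *m Q = Q /\
     (forall z : 'cV[algC]_(m * n), Q *m z = z <-> (z^T <= V)%MS) /\
     (forall w, F w <-> (K w /\ w Q = 1))) /\
  affine_iso F (@K (\rank V)).
Proof.
move=> he hf hsame F V.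
exact: (main_part he hf hsame).
Qed.
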